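(* Let $\alpha>0$ and consider the equilibria of $$\frac{d}{dt}v_n=-n^2v_n+\alpha v_n-2v_n\|v\|_H^2+v_n|v_n|^2,\quad n\in\mathbb Z.$$ Then every equilibrium having two or more nonzero components ($v_m\ne0$ and $v_k\ne0$ for some $m\ne k$) is unstable. The only stable equilibria are the one-component ones: $v_n=0$ for $n\ne k$, $v_k\ne0$, with $k^2<\frac{\alpha}{2}$.
   Context: $e_n=e^{inx}$, $H=L^2_{per}(-\pi,\pi)$ complex-valued, $v=\sum v_ne_n$, $\|v\|_H^2=\sum|v_n|^2$. The system is invariant under $v_n\mapsto e^{i\phi_n}v_n$, so each equilibrium may be rotated to a real one; (in)stability is understood for the real-valued system, via its linearization at a real equilibrium $v$ on real perturbations, $\frac d{dt}\theta_n=-n^2\theta_n+\alpha\theta_n-2\theta_n\|v\|_H^2-4v_n(v,\theta)+3\theta_nv_n^2$: unstable if this operator has a positive part of the spectrum, stable if all its eigenvalues are negative. *)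

(* Defs.v *)
From Stdlib Require Import Reals ZArith.
From Coquelicot Require Import Coquelicot.
Open Scope R_scope.

(* Sums over Z are split into the nonnegative indices k and the negative
   indices -(k+1), k : nat. *)
Definition zseries (f : Z -> R) : nat -> R :=
  fun k => f (Z.of_nat k) + f (- Z.of_nat (S k))%Z.

Definition in_H (v : Z -> R) : Prop := ex_series (zseries (fun n => (v n)^2)).

Definition normH2 (v : Z -> R) : R := Series (zseries (fun n => (v n)^2)).

Definition innerH (v th : Z -> R) : R := Series (zseries (fun n => v n * th n)).

Definition equilibrium (alpha : R) (v : Z -> R) : Prop :=
  in_H v /\
  forall n : Z,
    - (IZR n)^2 * v n + alpha * v n - 2 * v n * normH2 v + v n * (v n)^2 = 0.

(* The linearization at v, applied to a perturbation theta. *)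
Definition linop (alpha : R) (v th : Z -> R) (n : Z) : R :=
  - (IZR n)^2 * th n + alpha * th n - 2 * th n * normH2 v
  - 4 * v n * innerH v th + 3 * th n * (v n)^2.

Definition lin_eigenvalue (alpha : R) (v : Z -> R) (lam : R) : Prop :=
  exists th : Z -> R, in_H th /\ (exists n, th n <> 0) /\
    forall n, linop alpha v th n = lam * th n.

Definition unstable (alpha : R) (v : Z -> R) : Prop :=
  exists lam, 0 < lam /\ lin_eigenvalue alpha v lam.

Definition stable (alpha : R) (v : Z -> R) : Prop :=
  forall lam, lin_eigenvalue alpha v lam -> lam < 0.

(* Main.v *)
Require Import Defs.
From Stdlib Require Import Reals ZArith Lra Lia Ranalysis5 Classical.
From Coquelicot Require Import Coquelicot.
Open Scope R_scope.

Lemma is_series_evconst (a : nat -> R) (K : nat) (l : R) :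
  (forall N, (K <= N)%nat -> sum_f_R0 a N = l) -> is_series a l.
Proof.
  intros H. apply is_series_Reals. intros eps Heps. exists K. intros n Hn.
  rewrite H by lia. unfold R_dist. rewrite Rminus_eq_0, Rabs_R0. lra.
Qed.

Lemma sum_fin (a : nat -> R) (K : nat) :
  (forall j, (K <= j)%nat -> a j = 0) ->
  forall N, (K <= N)%nat -> sum_f_R0 a N = sum_f_R0 a K.
Proof.
  intros H N HN. induction HN as [|N HN IH]; [reflexivity|].
  simpl. rewrite IH, (H (S N)) by lia. ring.
Qed.

Lemma is_series_fin (a : nat -> R) (K : nat) :
  (forall j, (K <= j)%nat -> a j = 0) -> is_series a (sum_f_R0 a K).
Proof.
  intros H. apply (is_series_evconst a K). intros; apply sum_fin; auto.
Qed.

Lemma sum_delta (a : nat -> R) (i : nat) :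
  (forall j, j <> i -> a j = 0) -> forall N, (i <= N)%nat -> sum_f_R0 a N = a i.
Proof.
  intros H N HN. induction N as [|N IH].
  - assert (i = 0%nat) by lia. subst. reflexivity.
  - destruct (Nat.eq_dec i (S N)) as [->|Hne].
    + simpl. rewrite sum_eq_R0. ring. intros n Hn. apply H. lia.
    + simpl. rewrite IH by lia. rewrite (H (S N)) by lia. ring.
Qed.

Lemma zidx (p : Z) : exists i : nat,
  (Z.of_nat i = p \/ (- Z.of_nat (S i))%Z = p) /\
  (forall j, j <> i -> Z.of_nat j <> p /\ (- Z.of_nat (S j))%Z <> p).
Proof.
  destruct (Z_le_gt_dec 0 p).
  - exists (Z.to_nat p). split. left. lia. intros j Hj. split; lia.
  - exists (Z.to_nat (- p - 1)). split. right. lia. intros j Hj. split; lia.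
Qed.

Lemma zidx_val (f : Z -> R) (p : Z) :
  (forall n, n <> p -> f n = 0) -> exists i : nat,
  zseries f i = f p /\ (forall j, j <> i -> zseries f j = 0).
Proof.
  intros H. destruct (zidx p) as [i [Hi Hj]]. exists i. split.
  - unfold zseries. destruct Hi as [Hi|Hi].
    + rewrite Hi, (H (- Z.of_nat (S i))%Z) by lia. ring.
    + rewrite Hi, (H (Z.of_nat i)) by lia. ring.
  - intros j Hji. destruct (Hj j Hji). unfold zseries. rewrite !H by auto. ring.
Qed.

Lemma series_delta (f : Z -> R) (p : Z) :
  (forall n, n <> p -> f n = 0) -> is_series (zseries f) (f p).
Proof.
  intros H. destruct (zidx_val f p H) as [i [Hi Hj]].
  apply (is_series_evconst _ i). intros N HN. rewrite (sum_delta _ i Hj N HN). auto.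
Qed.

Lemma sum_nonneg_b (a : nat -> R) (N : nat) :
  (forall j, (j <= N)%nat -> 0 <= a j) -> 0 <= sum_f_R0 a N.
Proof.
  induction N as [|N IH]; intros H; simpl. apply H; lia.
  assert (0 <= sum_f_R0 a N) by (apply IH; intros; apply H; lia).
  assert (0 <= a (S N)) by (apply H; lia). lra.
Qed.

Lemma sum_ge_term (a : nat -> R) (N i : nat) :
  (forall j, (j <= N)%nat -> 0 <= a j) -> (i <= N)%nat -> a i <= sum_f_R0 a N.
Proof.
  intros H Hi. induction N as [|N IH].
  - assert (i = 0%nat) by lia. subst. simpl. lra.
  - destruct (Nat.eq_dec i (S N)) as [->|Hne].
    + simpl. assert (0 <= sum_f_R0 a N). { apply sum_nonneg_b. intros; apply H; lia. } lra.
    + simpl. assert (a i <= sum_f_R0 a N) by (apply IH; intros; try apply H; lia).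
      assert (0 <= a (S N)) by (apply H; lia). lra.
Qed.

Lemma sum_opp (a : nat -> R) (N : nat) :
  sum_f_R0 (fun j => - a j) N = - sum_f_R0 a N.
Proof. induction N; simpl. ring. rewrite IHN. ring. Qed.

Lemma sum_le_term (a : nat -> R) (N i : nat) :
  (forall j, (j <= N)%nat -> a j <= 0) -> (i <= N)%nat -> sum_f_R0 a N <= a i.
Proof.
  intros H Hi. pose proof (sum_ge_term (fun j => - a j) N i) as G.
  rewrite sum_opp in G. assert (- a i <= - sum_f_R0 a N); [|lra].
  apply G; auto. intros j Hj. specialize (H j Hj). lra.
Qed.
Lemma series0 : Series (fun _ : nat => 0) = 0.
Proof.
  apply is_series_unique. apply (is_series_evconst _ 0). intros. apply sum_eq_R0. auto.
Qed.

Lemma normH2_nonneg v : in_H v -> 0 <= normH2 v.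
Proof.
  intros H. unfold normH2. rewrite <- series0. apply Series_le; auto.
  intros n. unfold zseries. split. lra. nra.
Qed.

Lemma eq_sq alpha v n : equilibrium alpha v -> v n <> 0 ->
  (v n)^2 = (IZR n)^2 - alpha + 2 * normH2 v.
Proof.
  intros [_ H] Hn. specialize (H n).
  apply (Rmult_eq_reg_l (v n)); auto.
  assert (v n * v n ^ 2 - v n * (IZR n ^ 2 - alpha + 2 * normH2 v) = 0).
  { rewrite <- H. ring. } lra.
Qed.

Lemma fin_supp alpha v : equilibrium alpha v -> exists K : nat,
  forall j, (K <= j)%nat -> v (Z.of_nat j) = 0 /\ v (- Z.of_nat (S j))%Z = 0.
Proof.
  intros He. pose proof He as [HH _]. pose proof (normH2_nonneg v HH) as HN.
  apply ex_series_lim_0, is_lim_seq_spec in HH.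
  destruct (HH (mkposreal 1 Rlt_0_1)) as [N0 HN0].
  destruct (INR_unbounded (Rabs alpha + 1)) as [j0 Hj0].
  exists (Nat.max N0 j0). intros j Hj.
  specialize (HN0 j ltac:(lia)). simpl in HN0. unfold zseries in HN0.
  rewrite Rminus_0_r in HN0.
  assert (HJ : INR j0 <= INR j) by (apply le_INR; lia).
  assert (H1 : (v (Z.of_nat j))^2 + (v (- Z.of_nat (S j))%Z)^2 < 1).
  { apply Rabs_lt_between in HN0. lra. }
  assert (Hpos : 0 <= INR j) by apply pos_INR. pose proof (Rle_abs alpha). pose proof (Rabs_pos alpha).
  split.
  - destruct (Req_dec (v (Z.of_nat j)) 0) as [E|E]; auto. exfalso.
    pose proof (eq_sq alpha v _ He E) as Q. rewrite <- INR_IZR_INZ in Q.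
    assert (0 <= (v (- Z.of_nat (S j))%Z)^2) by apply pow2_ge_0.
    assert (1 <= INR j) by lra. assert (INR j <= INR j ^ 2) by nra. lra.
  - destruct (Req_dec (v (- Z.of_nat (S j))%Z) 0) as [E|E]; auto. exfalso.
    pose proof (eq_sq alpha v _ He E) as Q.
    rewrite opp_IZR, <- INR_IZR_INZ, S_INR in Q.
    assert (0 <= (v (Z.of_nat j))^2) by apply pow2_ge_0.
    assert (INR j + 1 <= (INR j + 1) ^ 2) by nra. lra.
Qed.

Lemma cont_sum (F : nat -> R -> R) (x0 : R) (N : nat) :
  (forall j, continuity_pt (F j) x0) ->
  continuity_pt (fun x => sum_f_R0 (fun j => F j x) N) x0.
Proof.
  intros H. induction N as [|N IH]; simpl.
  - apply H.
  - exact (continuity_pt_plus (fun x => sum_f_R0 (fun j => F j x) N) (F (S N)) x0 IH (H (S N))).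
Qed.

Lemma nat_min (P : nat -> Prop) : (exists n, P n) -> exists n, P n /\ forall k, P k -> (n <= k)%nat.
Proof.
  intros [n Hn]. apply NNPP. intros Hno.
  assert (forall m, ~ P m).
  { intros m. induction m as [m IH] using (well_founded_induction lt_wf).
    intros Pm. apply Hno. exists m. split; auto. intros k Pk.
    destruct (le_lt_dec m k); auto. exfalso. exact (IH k l Pk). }
  exact (H n Hn).
Qed.

Lemma sqabs (n : Z) : (IZR n)^2 = (INR (Z.abs_nat n))^2.
Proof.
  rewrite INR_IZR_INZ, Zabs2Nat.id_abs, <- Rabs_Zabs, pow2_abs. reflexivity.
Qed.

Lemma ex_supp (v f : Z -> R) (K : nat) :
  (forall j, (K <= j)%nat -> v (Z.of_nat j) = 0 /\ v (- Z.of_nat (S j))%Z = 0) ->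
  (forall n, v n = 0 -> f n = 0) ->
  is_series (zseries f) (sum_f_R0 (zseries f) K).
Proof.
  intros HK Hf. apply is_series_fin. intros j Hj. destruct (HK j Hj) as [A B].
  unfold zseries. rewrite (Hf _ A), (Hf _ B). ring.
Qed.

Lemma is_series_plus_R (a b : nat -> R) la lb :
  is_series a la -> is_series b lb -> is_series (fun n => a n + b n) (la + lb).
Proof. intros A B. exact (is_series_plus a b la lb A B). Qed.

Lemma is_series_ext_R (a b : nat -> R) (l : R) :
  (forall n, a n = b n) -> is_series a l -> is_series b l.
Proof. intros H. apply is_series_ext. exact H. Qed.

Lemma cont_of_derive (f : R -> R) (x : R) : ex_derive f x -> continuity_pt f x.
Proof.
  intros H. apply continuity_pt_filterlim.
  exact (ex_derive_continuous (K:=R_AbsRing) (V:=R_NormedModule) f x H).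
Qed.

Lemma tie_unstable alpha v n0 : equilibrium alpha v -> n0 <> 0%Z ->
  v n0 <> 0 -> v (- n0)%Z <> 0 -> unstable alpha v.
Proof.
  intros He Hn0 A B.
  destruct (fin_supp alpha v He) as [K HK].
  set (th := fun p => if Z.eq_dec p n0 then v (- n0)%Z else if Z.eq_dec p (- n0)%Z then - v n0 else 0).
  assert (Hin : innerH v th = 0).
  { unfold innerH. apply is_series_unique.
    set (f1 := fun p => if Z.eq_dec p n0 then v n0 * v (- n0)%Z else 0).
    set (f2 := fun p => if Z.eq_dec p (- n0)%Z then - (v (- n0)%Z * v n0) else 0).
    assert (S1 : is_series (zseries f1) (f1 n0)).
    { apply series_delta. intros n Hn. unfold f1. destruct (Z.eq_dec n n0); tauto. }
    assert (S2 : is_series (zseries f2) (f2 (- n0)%Z)).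
    { apply series_delta. intros n Hn. unfold f2. destruct (Z.eq_dec n (- n0)%Z); tauto. }
    pose proof (is_series_plus_R _ _ _ _ S1 S2) as S3.
    replace (f1 n0 + f2 (- n0)%Z) with 0 in S3
      by (unfold f1, f2; destruct (Z.eq_dec n0 n0); [|tauto];
          destruct (Z.eq_dec (- n0)%Z (- n0)%Z); [|tauto]; ring).
    revert S3. apply is_series_ext_R. intros j. unfold zseries, f1, f2, th.
    destruct (Z.eq_dec (Z.of_nat j) n0); destruct (Z.eq_dec (Z.of_nat j) (- n0)%Z);
    destruct (Z.eq_dec (- Z.of_nat (S j))%Z n0); destruct (Z.eq_dec (- Z.of_nat (S j))%Z (- n0)%Z);
    try lia; repeat match goal with H : @eq Z _ _ |- _ => rewrite H in *; clear H end; ring. }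
  pose proof (eq_sq alpha v _ He A) as QA.
  pose proof (eq_sq alpha v _ He B) as QB.
  rewrite opp_IZR in QB.
  exists (2 * (v n0)^2). split. { assert (0 < (v n0)^2) by (apply pow2_gt_0; auto). lra. }
  exists th. split; [|split].
  - unfold in_H. eexists. apply (ex_supp v _ K HK). intros n Hn. unfold th.
    destruct (Z.eq_dec n n0). subst; tauto. destruct (Z.eq_dec n (- n0)%Z). subst; tauto. ring.
  - exists n0. unfold th. destruct (Z.eq_dec n0 n0); tauto.
  - intros p. unfold linop. rewrite Hin. unfold th.
    destruct (Z.eq_dec p n0) as [->|H1].
    + replace ((IZR n0)^2) with ((v n0)^2 + alpha - 2 * normH2 v) by lra. ring.
    + destruct (Z.eq_dec p (- n0)%Z) as [->|H2].
      * rewrite opp_IZR.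
        replace ((- IZR n0)^2) with ((v (- n0)%Z)^2 + alpha - 2 * normH2 v) by lra.
        replace ((v (- n0)%Z)^2) with ((v n0)^2) by lra. ring.
      * ring.
Qed.

Lemma gen_unstable alpha v m k : equilibrium alpha v -> m <> k ->
  v m <> 0 -> v k <> 0 -> 2 * (v m)^2 < 2 * (v k)^2 ->
  (forall n, n <> m -> n <> k -> v n <> 0 -> 2 * (v k)^2 < 2 * (v n)^2) ->
  unstable alpha v.
Proof.
  intros He Hmk Hm Hk Hab Hrest.
  destruct (fin_supp alpha v He) as [K HK].
  set (a := 2 * (v m)^2) in *. set (b := 2 * (v k)^2) in *.
  assert (Ha : 0 < a) by (unfold a; assert (0 < (v m)^2) by (apply pow2_gt_0; auto); lra).
  set (t := fun n x => if Z.eq_dec n m then 2 * a * (b - x) else if Z.eq_dec n k then 2 * b * (a - x)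
            else (a - x) * (b - x) * (4 * (v n)^2 / (2 * (v n)^2 - x))).
  set (S := fun x => sum_f_R0 (fun j => zseries (fun n => t n x) j) K).
  set (h := fun x => (a - x) * (b - x) - S x).
  assert (Hcont : forall x, a <= x <= b -> continuity_pt h x).
  { intros x Hx. unfold h, S.
    apply (continuity_pt_minus (fun x => (a - x) * (b - x))
             (fun x => sum_f_R0 (fun j => zseries (fun n => t n x) j) K)).
    - apply cont_of_derive. auto_derive. auto.
    - apply (cont_sum (fun j x => zseries (fun n => t n x) j)). intros j.
      unfold zseries.
      assert (Ht : forall n, continuity_pt (t n) x).
      { intros n. apply cont_of_derive. unfold t.
        destruct (Z.eq_dec n m). auto_derive; auto. destruct (Z.eq_dec n k). auto_derive; auto.
        auto_derive. destruct (Req_dec (v n) 0) as [E|E].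
        - rewrite E. lra.
        - specialize (Hrest n n0 n1 E). fold b in Hrest. lra. }
      exact (continuity_pt_plus _ _ x (Ht _) (Ht _)). }
  assert (Hidx : forall p, v p <> 0 -> exists i : nat, (i < K)%nat /\ forall f : Z -> R, (forall n, 0 <= f n) -> f p <= zseries f i).
  { intros p Hp. destruct (zidx p) as [i [Hi _]]. exists i. split.
    - destruct (le_lt_dec K i) as [L|L]; auto. exfalso. destruct (HK i L) as [A B].
      destruct Hi as [Hi|Hi]; rewrite Hi in *; tauto.
    - intros f Hf. unfold zseries. pose proof (Hf (Z.of_nat i)). pose proof (Hf (- Z.of_nat (Datatypes.S i))%Z).
      destruct Hi as [Hi|Hi]; rewrite <- Hi; lra. }
  assert (Hta : forall n, 0 <= t n a).
  { intros n. unfold t. destruct (Z.eq_dec n m). nra. destruct (Z.eq_dec n k). nra.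
    replace (a - a) with 0 by ring. rewrite !Rmult_0_l. lra. }
  assert (Htb : forall n, t n b <= 0).
  { intros n. unfold t. destruct (Z.eq_dec n m). nra. destruct (Z.eq_dec n k). nra.
    replace (b - b) with 0 by ring. rewrite Rmult_0_r, !Rmult_0_l. lra. }
  assert (Hha : h a < 0).
  { unfold h, S. destruct (Hidx m Hm) as [i [Hi Hf]].
    assert (t m a <= zseries (fun n => t n a) i) by (apply (Hf (fun n => t n a)); auto).
    assert (zseries (fun n => t n a) i <= sum_f_R0 (fun j => zseries (fun n => t n a) j) K).
    { apply sum_ge_term; [|lia]. intros j _. unfold zseries. pose proof (Hta (Z.of_nat j)).
      pose proof (Hta (- Z.of_nat (Datatypes.S j))%Z). lra. }
    assert (0 < t m a).
    { unfold t. destruct (Z.eq_dec m m); [|tauto]. nra. }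
    replace (a - a) with 0 by ring. lra. }
  assert (Hhb : 0 < h b).
  { unfold h, S. destruct (Hidx k Hk) as [i [Hi Hf]].
    assert (- t k b <= zseries (fun n => - t n b) i) by (apply (Hf (fun n => - t n b)); intros n; specialize (Htb n); lra).
    assert (sum_f_R0 (fun j => zseries (fun n => t n b) j) K <= zseries (fun n => t n b) i).
    { apply sum_le_term; [|lia]. intros j _. unfold zseries. pose proof (Htb (Z.of_nat j)).
      pose proof (Htb (- Z.of_nat (Datatypes.S j))%Z). lra. }
    assert (t k b < 0).
    { unfold t. destruct (Z.eq_dec k m); [congruence|]. destruct (Z.eq_dec k k); [|tauto]. nra. }
    unfold zseries in *. replace (b - b) with 0 by ring. lra. }
  destruct (IVT_interv h a b Hcont Hab Hha Hhb) as [z [Hz Hhz]].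
  assert (Hza : a < z) by (destruct (Req_dec z a); [subst; lra|lra]).
  assert (Hzb : z < b) by (destruct (Req_dec z b); [subst; lra|lra]).
  set (th := fun n => v n / (2 * (v n)^2 - z)).
  assert (Hd : forall n, v n <> 0 -> 2 * (v n)^2 - z <> 0).
  { intros n Hn. destruct (Z.eq_dec n m) as [->|H1]. fold a; lra.
    destruct (Z.eq_dec n k) as [->|H2]. fold b; lra. specialize (Hrest n H1 H2 Hn). lra. }
  assert (Hth0 : forall n, v n = 0 -> th n = 0).
  { intros n Hn. unfold th. rewrite Hn. unfold Rdiv. ring. }
  assert (Htz : forall n, t n z = (a - z) * (b - z) * (4 * (v n * th n))).
  { intros n. unfold t, th. destruct (Z.eq_dec n m) as [->|H1].
    - fold a. unfold a. field. fold a. lra.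
    - destruct (Z.eq_dec n k) as [->|H2].
      + fold b. unfold b. field. fold b. lra.
      + unfold Rdiv. ring. }
  assert (Hsum : sum_f_R0 (zseries (fun n => v n * th n)) K = 1/4).
  { assert (E : S z = (a - z) * (b - z) * (4 * sum_f_R0 (zseries (fun n => v n * th n)) K)).
    { unfold S. rewrite scal_sum, scal_sum. apply sum_eq. intros j _. unfold zseries.
      rewrite !Htz. ring. }
    unfold h in Hhz. rewrite E in Hhz.
    assert ((a - z) * (b - z) <> 0) by nra.
    apply (Rmult_eq_reg_l ((a - z) * (b - z))); auto. lra. }
  assert (Hin : innerH v th = 1/4).
  { unfold innerH. rewrite <- Hsum. apply is_series_unique. apply (ex_supp v _ K HK).
    intros n Hn. rewrite Hn. ring. }
  exists z. split; [lra|]. exists th. split; [|split].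
  - unfold in_H. eexists. apply (ex_supp v _ K HK). intros n Hn. rewrite Hth0 by auto. ring.
  - exists m. unfold th. fold a. intros E. apply Hm.
    assert (a - z <> 0) by lra. apply (Rmult_eq_reg_r (/ (a - z))). rewrite Rmult_0_l. exact E.
    apply Rinv_neq_0_compat; auto.
  - intros n. unfold linop. rewrite Hin.
    destruct (Req_dec (v n) 0) as [E|E].
    + rewrite (Hth0 n E), E. ring.
    + pose proof (eq_sq alpha v n He E) as Q.
      assert (Eth : th n * (2 * (v n)^2 - z) = v n) by (unfold th; field; apply Hd; auto).
      replace ((IZR n)^2) with ((v n)^2 + alpha - 2 * normH2 v) by lra.
      nra.
Qed.

Lemma sq_lt alpha v n p : equilibrium alpha v -> v n <> 0 -> v p <> 0 ->
  (Z.abs_nat n < Z.abs_nat p)%nat -> 2 * (v n)^2 < 2 * (v p)^2.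
Proof.
  intros He Hn Hp Hlt.
  rewrite (eq_sq alpha v n He Hn), (eq_sq alpha v p He Hp), !sqabs.
  apply lt_INR in Hlt. pose proof (pos_INR (Z.abs_nat n)). nra.
Qed.

Lemma multi_unstable alpha v : equilibrium alpha v ->
  (exists m k : Z, m <> k /\ v m <> 0 /\ v k <> 0) -> unstable alpha v.
Proof.
  intros He [m0 [k0 [Hmk0 [Hm0 Hk0]]]].
  destruct (classic (exists n0, n0 <> 0%Z /\ v n0 <> 0 /\ v (- n0)%Z <> 0)) as [[n0 [X [Y W]]]|NT].
  { exact (tie_unstable alpha v n0 He X Y W). }
  assert (NT' : forall n, n <> 0%Z -> v n <> 0 -> v (- n)%Z = 0).
  { intros n X Y. apply NNPP. intros W. apply NT. exists n. auto. }
  clear NT.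
  destruct (nat_min (fun p => exists n, Z.abs_nat n = p /\ v n <> 0)) as [p0 [[m [Hm1 Hm2]] Pmin]].
  { exists (Z.abs_nat m0). exists m0. auto. }
  destruct (nat_min (fun q => exists n, Z.abs_nat n = q /\ v n <> 0 /\ n <> m)) as [q0 [[k [Hk1 [Hk2 Hk3]]] Qmin]].
  { destruct (Z.eq_dec m0 m) as [->|E].
    - exists (Z.abs_nat k0). exists k0. auto.
    - exists (Z.abs_nat m0). exists m0. auto. }
  assert (Hle : (Z.abs_nat m <= Z.abs_nat k)%nat).
  { rewrite Hm1. apply Pmin. exists k. auto. }
  assert (Hlt : (Z.abs_nat m < Z.abs_nat k)%nat).
  { destruct (Nat.eq_dec (Z.abs_nat m) (Z.abs_nat k)) as [E|E]; [|lia]. exfalso.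
    assert (k = (- m)%Z) by lia. subst k.
    assert (m <> 0%Z) by lia. apply Hk2. apply NT'; auto. }
  apply (gen_unstable alpha v m k He (fun E => Hk3 (eq_sym E)) Hm2 Hk2).
  - apply (sq_lt alpha); auto.
  - intros n Hn1 Hn2 Hn3. apply (sq_lt alpha); auto.
    assert (L : (Z.abs_nat k <= Z.abs_nat n)%nat).
    { rewrite Hk1. apply Qmin. exists n. auto. }
    destruct (Nat.eq_dec (Z.abs_nat k) (Z.abs_nat n)) as [E|E]; [|lia]. exfalso.
    assert (n = (- k)%Z) by lia. subst n.
    assert (k <> 0%Z) by lia. apply Hn3. apply NT'; auto.
Qed.

Definition delta0 (p : Z) : R := if Z.eq_dec p 0%Z then 1 else 0.

Lemma delta0_eig alpha v : v 0%Z = 0 ->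
  lin_eigenvalue alpha v (alpha - 2 * normH2 v).
Proof.
  intros H0. exists delta0. split; [|split].
  - unfold in_H. eexists. apply (series_delta _ 0%Z). intros n Hn. unfold delta0.
    destruct (Z.eq_dec n 0); [tauto|]. ring.
  - exists 0%Z. unfold delta0. simpl. lra.
  - assert (Hin : innerH v delta0 = 0).
    { unfold innerH. apply is_series_unique.
      assert (S0 : is_series (zseries (fun n => v n * delta0 n)) (v 0%Z * delta0 0%Z)).
      { apply (series_delta (fun n => v n * delta0 n) 0%Z). intros n Hn. unfold delta0. destruct (Z.eq_dec n 0); [tauto|]. ring. }
      rewrite H0, Rmult_0_l in S0. exact S0. }
    intros n. unfold linop. rewrite Hin. unfold delta0.
    destruct (Z.eq_dec n 0) as [->|E]. rewrite H0. ring. ring.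
Qed.

Lemma one_comp_N alpha v k : equilibrium alpha v -> v k <> 0 ->
  (forall n, n <> k -> v n = 0) -> normH2 v = (v k)^2 /\ (v k)^2 = alpha - (IZR k)^2.
Proof.
  intros He Hk Ho.
  assert (N : normH2 v = (v k)^2).
  { unfold normH2. apply is_series_unique. apply (series_delta (fun n => (v n)^2)).
    intros n Hn. rewrite Ho by auto. ring. }
  split; auto. pose proof (eq_sq alpha v k He Hk). lra.
Qed.

Theorem lemma5p2 (alpha : R) (Halpha : 0 < alpha) :
  (forall v : Z -> R, equilibrium alpha v ->
     (exists m k : Z, m <> k /\ v m <> 0 /\ v k <> 0) ->
     unstable alpha v)
  /\
  (forall v : Z -> R, equilibrium alpha v ->
     (stable alpha v <->
      exists k : Z, v k <> 0 /\ (forall n, n <> k -> v n = 0) /\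
                    (IZR k)^2 < alpha / 2)).
Proof.
  split. { intros v He. apply multi_unstable; auto. }
  intros v He. split.
  - intros Hs.
    destruct (classic (exists k, v k <> 0)) as [[k Hk]|Hz].
    2: { exfalso. assert (Z0 : forall n, v n = 0) by (intros n; apply NNPP; intros W; apply Hz; eauto).
         assert (N0 : normH2 v = 0).
         { unfold normH2. apply is_series_unique.
           assert (S0 : is_series (zseries (fun n => (v n)^2)) ((v 0%Z)^2)).
           { apply (series_delta (fun n => (v n)^2)). intros n _. rewrite Z0; ring. }
           rewrite Z0 in S0. replace (0^2) with 0 in S0 by ring. exact S0. }
         pose proof (Hs _ (delta0_eig alpha v (Z0 0%Z))). lra. }
    destruct (classic (exists n, n <> k /\ v n <> 0)) as [[n [Hn1 Hn2]]|Ho].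
    { exfalso. destruct (multi_unstable alpha v He) as [lam [Hl Hev]].
      exists n, k. auto. pose proof (Hs lam Hev). lra. }
    assert (Ho' : forall n, n <> k -> v n = 0).
    { intros n Hn. apply NNPP. intros W. apply Ho. eauto. }
    exists k. split; auto. split; auto.
    destruct (one_comp_N alpha v k He Hk Ho') as [N Q].
    destruct (Rlt_or_le ((IZR k)^2) (alpha / 2)) as [L|L]; auto. exfalso.
    destruct (Z.eq_dec k 0) as [->|Ek]. { simpl in L. lra. }
    pose proof (Hs _ (delta0_eig alpha v (Ho' 0%Z (fun E => Ek (eq_sym E))))).
    rewrite N, Q in H. lra.
  - intros [k [Hk [Ho L]]] lam [th [Hth [[p Hp] Hev]]].
    destruct (one_comp_N alpha v k He Hk Ho) as [N Q].
    assert (Hin : innerH v th = v k * th k).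
    { unfold innerH. apply is_series_unique. apply (series_delta (fun n => v n * th n)).
      intros n Hn. rewrite Ho by auto. ring. }
    specialize (Hev p). unfold linop in Hev. rewrite Hin, N in Hev.
    destruct (Z.eq_dec p k) as [->|E].
    + assert (lam = - 2 * (v k)^2).
      { apply (Rmult_eq_reg_r (th k)); auto.
        replace ((IZR k)^2) with (alpha - (v k)^2) in Hev by lra. lra. }
      assert (0 < (v k)^2) by (apply pow2_gt_0; auto). lra.
    + rewrite (Ho p E) in Hev.
      assert (lam = - (IZR p)^2 + alpha - 2 * (v k)^2).
      { apply (Rmult_eq_reg_r (th p)); auto. lra. }
      pose proof (pow2_ge_0 (IZR p)). lra.
Qed.
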